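(* Fix the model parameters $\tau_{DA},L_P,L_U,p_P^i,p_U^i,c_P,c_I,\xi_{\rm cov},ded,Cov_{\max},D_{\max}$ and a population size vector $\mathbf m$ as in the context, and suppose Assumption (A) holds. (i) Let $K_1,K_2\in\mathbb N$ with $K_1\le K_2$ and $\beta_{IA}\in(0,1]$. If $\mathbf x^1$ is any Nash equilibrium of the population game with parameters $(K_1,\beta_{IA})$ and $\mathbf x^2$ is any Nash equilibrium of the population game with parameters $(K_2,\beta_{IA})$, then $\sum_{d\in\mathcal D}x^1_{d,P}\le\sum_{d\in\mathcal D}x^2_{d,P}$. (ii) Let $K\in\mathbb N$ and $0<\beta^1_{IA}\le\beta^2_{IA}\le 1$. If $\mathbf x^1$ is any Nash equilibrium of the game with parameters $(K,\beta^1_{IA})$ and $\mathbf x^2$ is any Nash equilibrium of the game with parameters $(K,\beta^2_{IA})$, then $\sum_{d\in\mathcal D}x^1_{d,P}\le\sum_{d\in\mathcal D}x^2_{d,P}$.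
   Context: Population game model. Let $D_{\max}\in\mathbb N$, $\mathcal D=\{1,\dots,D_{\max}\}$ (population $d$ = nodes of degree $d$), and action set $\mathcal A=\{I,N,P\}$ (insurance, no action, protection). A population size vector is $\mathbf m=(m_d)_{d\in\mathcal D}$ with $m_d>0$ and $\sum_d m_d=1$. A social state is $\mathbf x=(x_{d,a})_{d\in\mathcal D,a\in\mathcal A}$ with $x_{d,a}\ge0$ and $\sum_{a}x_{d,a}=m_d$; $\mathcal X$ is the set of social states. Parameters: $\tau_{DA}\in(0,1]$; $0\le L_P<L_U$, $\Delta L=L_U-L_P$; $0\le p_P^i<p_U^i\le1$, $\Delta p=p_U^i-p_P^i$; $\beta_{IA}\in(0,1]$; $K\in\mathbb N$; costs $c_P,c_I\ge0$; $\xi_{\rm cov}\in(0,1]$, $ded\ge0$, $Cov_{\max}\ge0$. Define $w_d=d\,m_d/\sum_{d'}d'm_{d'}$, $d_{\rm avg}=\sum_d d\,m_d$, $g_{d,a}=x_{d,a}/m_d$, $g_{d,U}=g_{d,N}+g_{d,I}$, and $\gamma(\mathbf x)=\beta_{IA}\sum_{d}w_d(g_{d,P}p_P^i+g_{d,U}p_U^i)$, $\lambda(\mathbf x)=\beta_{IA}\sum_d w_d(d-1)(g_{d,P}p_P^i+g_{d,U}p_U^i)$, and the exposure $e(\mathbf x)=\gamma(\mathbf x)\sum_{k=1}^K\lambda(\mathbf x)^{k-1}$. Costs: $C_{d,P}(\mathbf x)=\tau_{DA}(1+d\,e(\mathbf x))L_P+c_P$, $C_{d,N}(\mathbf x)=\tau_{DA}(1+d\,e(\mathbf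 x))L_U$, $C_{d,I}(\mathbf x)=C_{d,N}(\mathbf x)+c_I-Ins(\mathbf x,d)$ where $Ins(\mathbf x,d)=\min\big(Cov_{\max},\ \xi_{\rm cov}\max(0,C_{d,N}(\mathbf x)-ded)\big)$. A social state $\mathbf x^\star$ is a Nash equilibrium if for all $d\in\mathcal D$, $a\in\mathcal A$: $x^\star_{d,a}>0$ implies $C_{d,a}(\mathbf x^\star)=\min_{a'\in\mathcal A}C_{d,a'}(\mathbf x^\star)$. Assumption (A): $L_P<(1-\xi_{\rm cov})L_U$ and $c_P>c_I+ded$. *)

(* Defs.v *)
From mathcomp Require Import all_boot all_order all_algebra.
From mathcomp Require Import reals.
Set Implicit Arguments. Unset Strict Implicit. Unset Printing Implicit Defensive.
Import Order.TTheory GRing.Theory Num.Theory.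
Local Open Scope ring_scope.

(* Actions: insurance, no action, protection. *)
Inductive action := aI | aN | aP.

Record params (R : realType) := Params {
  tauDA : R; LP : R; LU : R; pP : R; pU : R;
  cP : R; cI : R; xi : R; ded : R; Covmax : R }.

Section Model.
Variables (R : realType) (Dmax : nat) (pr : params R) (m : 'I_Dmax -> R).

Definition valid_params : Prop :=
  (0 < tauDA pr <= 1) /\ (0 <= LP pr < LU pr) /\ (0 <= pP pr < pU pr) /\ (pU pr <= 1) /\
  (0 <= cP pr) /\ (0 <= cI pr) /\ (0 < xi pr <= 1) /\
  (0 <= ded pr) /\ (0 <= Covmax pr).

Definition assumptionA : Prop :=
  LP pr < (1 - xi pr) * LU pr /\ cI pr + ded pr < cP pr.

(* Population d (index i : 'I_Dmax) consists of nodes of degree d = i+1. *)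
Definition deg (i : 'I_Dmax) : R := (i.+1)%:R.

Definition pop_size_vector : Prop :=
  (forall d, 0 < m d) /\ \sum_(d < Dmax) m d = 1.

Definition social_state (x : 'I_Dmax -> action -> R) : Prop :=
  forall d, [/\ 0 <= x d aI, 0 <= x d aN, 0 <= x d aP & x d aI + x d aN + x d aP = m d].

Definition wgt (d : 'I_Dmax) : R :=
  deg d * m d / \sum_(d' < Dmax) deg d' * m d'.

Definition gfrac (x : 'I_Dmax -> action -> R) d a : R := x d a / m d.
Definition gU (x : 'I_Dmax -> action -> R) d : R := gfrac x d aN + gfrac x d aI.

Variables (K : nat) (beta : R).

Definition risk x d : R := gfrac x d aP * pP pr + gU x d * pU pr.

Definition gamma x : R := beta * \sum_(d < Dmax) wgt d * risk x d.
Definition lambda x : R := beta * \sum_(d < Dmax) wgt d * (deg d - 1) * risk x d.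

Definition exposure x : R := gamma x * \sum_(1 <= k < K.+1) lambda x ^+ (k.-1).

Definition costN x d : R := tauDA pr * (1 + deg d * exposure x) * LU pr.
Definition costP x d : R := tauDA pr * (1 + deg d * exposure x) * LP pr + cP pr.
Definition Ins x d : R :=
  Num.min (Covmax pr) (xi pr * Num.max 0 (costN x d - ded pr)).
Definition costI x d : R := costN x d + cI pr - Ins x d.

Definition cost x d (a : action) : R :=
  match a with aI => costI x d | aN => costN x d | aP => costP x d end.

Definition min_cost x d : R :=
  Num.min (cost x d aI) (Num.min (cost x d aN) (cost x d aP)).

Definition nash_eq (x : 'I_Dmax -> action -> R) : Prop :=
  social_state x /\
  forall d a, 0 < x d a -> cost x d a = min_cost x d.

End Model.

Definition total_P (R : realType) (Dmax : nat) (x : 'I_Dmax -> action -> R) : R :=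
  \sum_(d < Dmax) x d aP.

(* Main.v *)
Require Import Defs.
From mathcomp Require Import all_boot all_order all_algebra.
From mathcomp Require Import reals.
From mathcomp Require Import ring lra.
Set Implicit Arguments. Unset Strict Implicit.
Local Open Scope ring_scope.
Import Order.TTheory GRing.Theory Num.Theory.
Local Open Scope ring_scope.

Definition fN (R : realType) (pr : params R) (a : R) := a * LU pr.
Definition fP (R : realType) (pr : params R) (a : R) := a * LP pr + cP pr.
Definition fI (R : realType) (pr : params R) (a : R) :=
  a * LU pr + cI pr - Num.min (Covmax pr) (xi pr * Num.max 0 (a * LU pr - ded pr)).

Lemma max0_lip (R : realType) (z z' : R) : z <= z' ->
  Num.max 0 z' - Num.max 0 z <= z' - z.
Proof. move=> h; rewrite !maxEle; case: (leP 0 z); case: (leP 0 z') => *. all: try lra. Qed.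

Lemma min_lip (R : realType) (C y y' : R) : y <= y' ->
  Num.min C y' - Num.min C y <= y' - y.
Proof. by move=> h; rewrite !minEle; case: (leP C y); case: (leP C y') => *; lra. Qed.

Lemma max0_mono (R : realType) (z z' : R) : z <= z' -> Num.max 0 z <= Num.max 0 z'.
Proof. move=> h; rewrite !maxEle; case: (leP 0 z); case: (leP 0 z') => *. all: try lra. Qed.

Lemma keyM (R : realType) (pr : params R) (a a' : R) :
  valid_params pr -> assumptionA pr -> a < a' ->
  fP pr a <= fI pr a -> fP pr a <= fN pr a ->
  fP pr a' < fI pr a' /\ fP pr a' < fN pr a'.
Proof.
move=> [_ [/andP[LP0 LPU] [_ [_ [_ [_ [/andP[xi0 xi1] _]]]]]]] [hA _] haa h1 h2.
rewrite /fP /fI /fN in h1 h2 *.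
set z := a * LU pr - ded pr; set z' := a' * LU pr - ded pr.
have hz : z <= z' by rewrite /z /z' lerD2r ler_wpM2r //; lra.
have hM := max0_lip hz.
have hM2 : xi pr * Num.max 0 z' - xi pr * Num.max 0 z <= xi pr * (z' - z).
  by rewrite -mulrBr ler_wpM2l //; lra.
have hm := max0_mono hz.
have hm2 : xi pr * Num.max 0 z <= xi pr * Num.max 0 z' by rewrite ler_wpM2l //; lra.
have hmin := min_lip (Covmax pr) hm2.
have hp : 0 < (a' - a) * ((1 - xi pr) * LU pr - LP pr) by rewrite mulr_gt0 // ?subr_gt0.
have hp2 : 0 < (a' - a) * (LU pr - LP pr) by rewrite mulr_gt0 // ?subr_gt0.
have ez : z' - z = (a' - a) * LU pr by rewrite /z /z'; ring.
rewrite ez in hM2.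
split; lra.
Qed.

Lemma min3 (R : realType) (a b c : R) :
  Num.min a (Num.min b c) <= a /\ Num.min a (Num.min b c) <= b /\ Num.min a (Num.min b c) <= c.
Proof. rewrite !minEle; case: (leP b c); case: (leP a _) => *; lra. Qed.

Lemma xP_le (R : realType) Dmax (m : 'I_Dmax -> R) x d :
  social_state m x -> 0 <= x d aP <= m d.
Proof. by move=> /(_ d) [h1 h2 h3 h4]; apply/andP; split; lra. Qed.

Lemma gP_eq (R : realType) Dmax (m : 'I_Dmax -> R) x d :
  pop_size_vector m -> gfrac m x d aP = x d aP / m d.
Proof. by []. Qed.

Lemma risk_eq (R : realType) Dmax (pr : params R) (m : 'I_Dmax -> R) x d :
  social_state m x -> pop_size_vector m ->
  risk pr m x d = gfrac m x d aP * pP pr + (1 - gfrac m x d aP) * pU pr.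
Proof.
move=> /(_ d) [h1 h2 h3 h4] [hm _]; have := hm d => md.
rewrite /risk /gU /gfrac; congr (_ + _); congr (_ * _).
have -> : x d aI = m d - x d aN - x d aP by lra.
by field; rewrite gt_eqF.
Qed.

Lemma g_bounds (R : realType) Dmax (m : 'I_Dmax -> R) x d :
  social_state m x -> pop_size_vector m ->
  0 <= gfrac m x d aP <= 1.
Proof.
move=> hs [hm _]; have md := hm d; have /andP[a b] := xP_le d hs.
rewrite /gfrac; apply/andP; split; first by rewrite divr_ge0 // ltW.
by rewrite ler_pdivrMr // mul1r.
Qed.

Lemma risk_ge0 (R : realType) Dmax (pr : params R) (m : 'I_Dmax -> R) x d :
  valid_params pr -> social_state m x -> pop_size_vector m -> 0 <= risk pr m x d.
Proof.
move=> [_ [_ [/andP[p0 p1] _]]] hs hp; rewrite risk_eq //.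
have /andP[a b] := g_bounds d hs hp.
by rewrite addr_ge0 // mulr_ge0 //; lra.
Qed.

Lemma risk_le (R : realType) Dmax (pr : params R) (m : 'I_Dmax -> R) x1 x2 d :
  valid_params pr -> social_state m x1 -> social_state m x2 -> pop_size_vector m ->
  x2 d aP <= x1 d aP -> risk pr m x1 d <= risk pr m x2 d.
Proof.
move=> [_ [_ [/andP[p0 p1] _]]] s1 s2 hp hx; rewrite !risk_eq //.
have : gfrac m x2 d aP <= gfrac m x1 d aP.
  by rewrite /gfrac ler_pM2r // invr_gt0; case: hp => h _; apply: h.
move=> h.
have : 0 <= (gfrac m x1 d aP - gfrac m x2 d aP) * (pU pr - pP pr) by rewrite mulr_ge0 //; lra.
move=> h2; lra.
Qed.

Lemma risk_lt (R : realType) Dmax (pr : params R) (m : 'I_Dmax -> R) x1 x2 d :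
  valid_params pr -> social_state m x1 -> social_state m x2 -> pop_size_vector m ->
  x2 d aP < x1 d aP -> risk pr m x1 d < risk pr m x2 d.
Proof.
move=> [_ [_ [/andP[p0 p1] _]]] s1 s2 hp hx; rewrite !risk_eq //.
have : gfrac m x2 d aP < gfrac m x1 d aP.
  by rewrite /gfrac ltr_pM2r // invr_gt0; case: hp => h _; apply: h.
move=> h.
have : 0 < (gfrac m x1 d aP - gfrac m x2 d aP) * (pU pr - pP pr) by rewrite mulr_gt0 //; lra.
move=> h2; lra.
Qed.

Lemma deg_ge1 (R : realType) Dmax (d : 'I_Dmax) : 1 <= deg R d.
Proof. by rewrite /deg ler1n. Qed.

Lemma den_ge (R : realType) Dmax (m : 'I_Dmax -> R) d :
  pop_size_vector m -> deg R d * m d <= \sum_(d' < Dmax) deg R d' * m d'.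
Proof.
move=> [hm _]; rewrite (bigD1 d) //= lerDl sumr_ge0 // => i _.
by rewrite mulr_ge0 // ?ltW //; apply: le_trans (deg_ge1 i).
Qed.

Lemma wgt_gt0 (R : realType) Dmax (m : 'I_Dmax -> R) d :
  pop_size_vector m -> 0 < wgt m d.
Proof.
move=> hp; have h := den_ge d hp; case: hp => hm _.
have p : 0 < deg R d * m d by rewrite mulr_gt0 //; apply: lt_le_trans (deg_ge1 d).
by rewrite /wgt divr_gt0 //; apply: lt_le_trans h.
Qed.

Definition Ssum (R : realType) (K : nat) (l : R) := \sum_(1 <= k < K.+1) l ^+ (k.-1).

Lemma exposureE (R : realType) Dmax (pr : params R) (m : 'I_Dmax -> R) K beta x :
  exposure pr m K beta x = gamma pr m beta x * Ssum K (lambda pr m beta x).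
Proof. by []. Qed.

Lemma Ssum_ge1 (R : realType) K (l : R) : (1 <= K)%N -> 0 <= l -> 1 <= Ssum K l.
Proof.
move=> hK hl; rewrite /Ssum big_ltn // expr0 lerDl sumr_ge0 // => i _.
exact: exprn_ge0.
Qed.

Lemma Ssum_mono (R : realType) K1 K2 (l1 l2 : R) : (K1 <= K2)%N -> 0 <= l1 -> l1 <= l2 ->
  Ssum K1 l1 <= Ssum K2 l2.
Proof.
move=> hK h0 hl; rewrite /Ssum (@big_cat_nat _ _ _ K1.+1 1 K2.+1) //=.
rewrite -[X in X <= _]addr0; apply: lerD.
  apply: ler_sum => i _; apply: lerXn2r => //; rewrite ?inE // ?nnegrE //.
  by apply: le_trans hl.
rewrite sumr_ge0 // => i _; apply: exprn_ge0; exact: le_trans hl.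
Qed.

Lemma sum_w_mono (R : realType) Dmax (pr : params R) (m : 'I_Dmax -> R) (c : 'I_Dmax -> R) x1 x2 :
  valid_params pr -> social_state m x1 -> social_state m x2 -> pop_size_vector m ->
  (forall d, 0 <= c d) ->
  (forall d, x2 d aP <= x1 d aP) ->
  0 <= \sum_(d < Dmax) wgt m d * c d * risk pr m x1 d /\
  \sum_(d < Dmax) wgt m d * c d * risk pr m x1 d <= \sum_(d < Dmax) wgt m d * c d * risk pr m x2 d.
Proof.
move=> hv s1 s2 hp hc hx; split.
  apply: sumr_ge0 => d _; have w := wgt_gt0 d hp.
  apply: mulr_ge0; last exact: risk_ge0.
  by apply: mulr_ge0 => //; apply: ltW.
apply: ler_sum => d _; have w := wgt_gt0 d hp; apply: ler_wpM2l; last exact: risk_le.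
by apply: mulr_ge0 => //; apply: ltW.
Qed.

Lemma exposure_mono (R : realType) Dmax (pr : params R) (m : 'I_Dmax -> R) K1 K2 b1 b2 x1 x2 :
  valid_params pr -> pop_size_vector m -> (K1 <= K2)%N -> 0 < b1 -> b1 <= b2 ->
  social_state m x1 -> social_state m x2 -> (forall d, x2 d aP <= x1 d aP) ->
  0 <= gamma pr m b1 x1 /\
  exposure pr m K1 b1 x1 <= exposure pr m K2 b2 x2.
Proof.
move=> hv hp hK hb hbb s1 s2 hx.
have [g0 g1] := sum_w_mono (c := fun=> 1) hv s1 s2 hp (fun=> ler01) hx.
have hc : forall d : 'I_Dmax, 0 <= deg R d - 1 by move=> d; rewrite subr_ge0 deg_ge1.
have [l0 l1] := sum_w_mono (c := fun d => deg R d - 1) hv s1 s2 hp hc hx.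
have eg : forall x, gamma pr m b1 x = b1 * \sum_(d < Dmax) wgt m d * 1 * risk pr m x d.
  by move=> x; rewrite /gamma; congr (_ * _); apply: eq_bigr => d _; rewrite mulr1.
have eg2 : forall x, gamma pr m b2 x = b2 * \sum_(d < Dmax) wgt m d * 1 * risk pr m x d.
  by move=> x; rewrite /gamma; congr (_ * _); apply: eq_bigr => d _; rewrite mulr1.
have G0 : 0 <= gamma pr m b1 x1 by rewrite eg mulr_ge0 // ltW.
split => //.
rewrite !exposureE; apply: ler_pM => //.
- rewrite /Ssum sumr_ge0 // => i _; apply: exprn_ge0.
  by rewrite /lambda mulr_ge0 // ltW.
- rewrite eg eg2; apply: ler_pM => //; by rewrite ltW.
- apply: Ssum_mono => //; first by rewrite /lambda mulr_ge0 // ltW.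
  rewrite /lambda; apply: ler_pM => //; by rewrite ltW.
Qed.

Lemma exposure_strict (R : realType) Dmax (pr : params R) (m : 'I_Dmax -> R) K1 K2 b1 b2 x1 x2 d0 :
  valid_params pr -> pop_size_vector m -> (1 <= K1)%N -> (K1 <= K2)%N -> 0 < b1 -> b1 <= b2 ->
  social_state m x1 -> social_state m x2 -> (forall d, x2 d aP <= x1 d aP) ->
  x2 d0 aP < x1 d0 aP ->
  exposure pr m K1 b1 x1 < exposure pr m K2 b2 x2.
Proof.
move=> hv hp hK1 hK hb hbb s1 s2 hx hx0.
have [g0 g1] := sum_w_mono (c := fun=> 1) hv s1 s2 hp (fun=> ler01) hx.
have hc : forall d : 'I_Dmax, 0 <= deg R d - 1 by move=> d; rewrite subr_ge0 deg_ge1.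
have [l0 l1] := sum_w_mono (c := fun d => deg R d - 1) hv s1 s2 hp hc hx.
have eg : forall b x, gamma pr m b x = b * \sum_(d < Dmax) wgt m d * 1 * risk pr m x d.
  by move=> b x; rewrite /gamma; congr (_ * _); apply: eq_bigr => d _; rewrite mulr1.
have gs : \sum_(d < Dmax) wgt m d * 1 * risk pr m x1 d < \sum_(d < Dmax) wgt m d * 1 * risk pr m x2 d.
  rewrite (bigD1 d0) //= [X in _ < X](bigD1 d0) //=; apply: ltr_leD.
    rewrite ltr_pM2l ?risk_lt // mulr1; exact: wgt_gt0.
  apply: ler_sum => d _; have w := wgt_gt0 d hp; apply: ler_wpM2l; last exact: risk_le.
  by rewrite mulr1 ltW.
have G : gamma pr m b1 x1 < gamma pr m b2 x2.
  rewrite !eg; set A := \sum_(d < Dmax) _; set B := \sum_(d < Dmax) _.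
  have h1 : b1 * A < b1 * B by rewrite ltr_pM2l.
  have h2 : b1 * B <= b2 * B by rewrite ler_wpM2r //; apply: le_trans g1.
  exact: lt_le_trans h1 h2.
have L1 : 0 <= lambda pr m b1 x1 by rewrite /lambda mulr_ge0 // ltW.
have S1 := Ssum_ge1 hK1 L1.
have S12 : Ssum K1 (lambda pr m b1 x1) <= Ssum K2 (lambda pr m b2 x2).
  apply: Ssum_mono => //; rewrite /lambda; apply: ler_pM => //; by rewrite ltW.
have G2 : 0 <= gamma pr m b2 x2.
  rewrite eg; apply: mulr_ge0; [apply: ltW; exact: lt_le_trans hb hbb | exact: le_trans g0 g1].
rewrite !exposureE.
have h1 : gamma pr m b1 x1 * Ssum K1 (lambda pr m b1 x1) < gamma pr m b2 x2 * Ssum K1 (lambda pr m b1 x1).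
  by rewrite ltr_pM2r // (lt_le_trans ltr01 S1).
apply: lt_le_trans h1 _; by rewrite ler_wpM2l.
Qed.

Lemma exposure_zero (R : realType) Dmax (pr : params R) (m : 'I_Dmax -> R) K b x d :
  valid_params pr -> pop_size_vector m -> (1 <= K)%N -> 0 < b ->
  social_state m x -> exposure pr m K b x <= 0 -> x d aP = m d.
Proof.
move=> hv hp hK hb s he.
have [G0 _] := exposure_mono hv hp (leqnn K) hb (lexx b) s s (fun=> lexx _).
have L : 0 <= lambda pr m b x.
  have hc : forall d : 'I_Dmax, 0 <= deg R d - 1 by move=> d'; rewrite subr_ge0 deg_ge1.
  have [l0 _] := sum_w_mono (c := fun d => deg R d - 1) hv s s hp hc (fun=> lexx _).
  by rewrite /lambda mulr_ge0 // ltW.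
have S1 := Ssum_ge1 hK L.
have G : gamma pr m b x = 0.
  apply/eqP; rewrite eq_le G0 andbT; rewrite leNgt; apply/negP => g.
  have : 0 < gamma pr m b x * Ssum K (lambda pr m b x) by rewrite mulr_gt0 // (lt_le_trans ltr01 S1).
  by rewrite -exposureE ltNge he.
move: G; rewrite /gamma => /eqP; rewrite mulf_eq0 (gt_eqF hb) /= => /eqP hs.
have hnn : forall i : 'I_Dmax, true -> 0 <= wgt m i * risk pr m x i.
  move=> i _; apply: mulr_ge0; [exact/ltW/wgt_gt0 | exact: risk_ge0].
have := @psumr_eq0P _ _ _ _ hnn hs d isT.
have w := wgt_gt0 d hp.
move=> /eqP; rewrite mulf_eq0 (gt_eqF w) /= risk_eq // => /eqP hr0.
have /andP[g0 g1] := g_bounds d s hp.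
move: hv => [_ [_ [/andP[p0 p1] _]]].
have h1 : 0 <= gfrac m x d aP * pP pr by rewrite mulr_ge0.
have h2 : 0 <= (1 - gfrac m x d aP) * pU pr by rewrite mulr_ge0 //; lra.
have /eqP : (1 - gfrac m x d aP) * pU pr = 0 by lra.
rewrite mulf_eq0 (gt_eqF (le_lt_trans p0 p1)) orbF subr_eq0 /gfrac => /eqP e.
case: hp => hm _; have := hm d => md.
by rewrite -[x d aP](divfK (lt0r_neq0 md)) -e mul1r.
Qed.

Definition lev (R : realType) Dmax (pr : params R) (m : 'I_Dmax -> R) K beta x (d : 'I_Dmax) :=
  tauDA pr * (1 + deg R d * exposure pr m K beta x).

Lemma L0 (R : realType) Dmax (pr : params R) (m : 'I_Dmax -> R) K beta x d :
  nash_eq pr m K beta x -> 0 < x d aP ->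
  fP pr (lev pr m K beta x d) <= fI pr (lev pr m K beta x d) /\
  fP pr (lev pr m K beta x d) <= fN pr (lev pr m K beta x d).
Proof.
move=> [_ hn] hx; have := hn d aP hx; rewrite /min_cost => e.
have [h1 [h2 h3]] := min3 (cost pr m K beta x d aI) (cost pr m K beta x d aN) (cost pr m K beta x d aP).
rewrite -e in h1 h2; by split.
Qed.

Lemma L1 (R : realType) Dmax (pr : params R) (m : 'I_Dmax -> R) K beta x d :
  nash_eq pr m K beta x ->
  fP pr (lev pr m K beta x d) < fI pr (lev pr m K beta x d) ->
  fP pr (lev pr m K beta x d) < fN pr (lev pr m K beta x d) ->
  x d aP = m d.
Proof.
move=> [hs hn] hI hN.
have [h1 [h2 h3]] := min3 (cost pr m K beta x d aI) (cost pr m K beta x d aN) (cost pr m K beta x d aP).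
have xI : x d aI <= 0.
  rewrite leNgt; apply/negP => p; have := hn d aI p => e.
  have : cost pr m K beta x d aI <= cost pr m K beta x d aP by rewrite e.
  by rewrite /= leNgt hI.
have xN : x d aN <= 0.
  rewrite leNgt; apply/negP => p; have := hn d aN p => e.
  have : cost pr m K beta x d aN <= cost pr m K beta x d aP by rewrite e.
  by rewrite /= leNgt hN.
have [a b c s] := hs d; lra.
Qed.

Lemma CA (R : realType) Dmax (pr : params R) (m : 'I_Dmax -> R) Ka ba Kb bb xa xb d d' :
  valid_params pr -> assumptionA pr ->
  nash_eq pr m Ka ba xa -> nash_eq pr m Kb bb xb ->
  lev pr m Ka ba xa d < lev pr m Kb bb xb d' -> 0 < xa d aP -> xb d' aP = m d'.
Proof.
move=> hv hA na nb hl hx.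
have [h1 h2] := L0 na hx.
have [k1 k2] := keyM hv hA hl h1 h2.
exact: L1 nb k1 k2.
Qed.

Lemma deg_lt (R : realType) Dmax (d d' : 'I_Dmax) : (d < d')%N -> deg R d < deg R d'.
Proof. by move=> h; rewrite /deg ltr_nat ltnS. Qed.

Lemma deg_gt0 (R : realType) Dmax (d : 'I_Dmax) : 0 < deg R d.
Proof. exact: lt_le_trans ltr01 (deg_ge1 R d). Qed.

Lemma Gmain (R : realType) Dmax (pr : params R) (m : 'I_Dmax -> R) K1 K2 b1 b2 x1 x2 :
  valid_params pr -> pop_size_vector m -> assumptionA pr ->
  (1 <= K1)%N -> (K1 <= K2)%N -> 0 < b1 -> b1 <= b2 ->
  nash_eq pr m K1 b1 x1 -> nash_eq pr m K2 b2 x2 -> total_P x1 <= total_P x2.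
Proof.
move=> hv hp hA hK1 hK hb hbb n1 n2.
have tau0 : 0 < tauDA pr by case: hv => /andP[].
have s1 := n1.1; have s2 := n2.1.
have hb2 : 0 < b2 by exact: lt_le_trans hb hbb.
have hK2 : (1 <= K2)%N by exact: leq_trans hK1 hK.
set e1 := exposure pr m K1 b1 x1; set e2 := exposure pr m K2 b2 x2.
have levlt : forall d, e1 < e2 -> lev pr m K1 b1 x1 d < lev pr m K2 b2 x2 d.
  by move=> d h; rewrite /lev ltr_pM2l // ltrD2l ltr_pM2l // deg_gt0.
have levlt' : forall d, e2 < e1 -> lev pr m K2 b2 x2 d < lev pr m K1 b1 x1 d.
  by move=> d h; rewrite /lev ltr_pM2l // ltrD2l ltr_pM2l // deg_gt0.
case: (ltgtP e1 e2) => he.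
- apply: ler_sum => d _; case: (leP (x1 d aP) 0) => h.
    by apply: le_trans h _; have /andP[] := xP_le d s2.
  rewrite (CA hv hA n1 n2 (levlt d he) h).
  by have /andP[] := xP_le d s1.
- have pw : forall d, x2 d aP <= x1 d aP.
    move=> d; case: (leP (x2 d aP) 0) => h.
      by apply: le_trans h _; have /andP[] := xP_le d s1.
    rewrite (CA hv hA n2 n1 (levlt' d he) h).
    by have /andP[] := xP_le d s2.
  have [_ h] := exposure_mono hv hp hK hb hbb s1 s2 pw.
  by move: he; rewrite ltNge h.
- case: (ltP 0 e1) => he0.
  + rewrite leNgt; apply/negP => hlt.
    have [d' hd'] : exists d', x2 d' aP < x1 d' aP.
      case: (boolP [exists d, x2 d aP < x1 d aP]) => [/existsP//|].
      rewrite negb_exists => /forallP pw; move: hlt; rewrite ltNge.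
      by rewrite ler_sum // => d _; rewrite leNgt pw.
    case: (boolP [exists d, x1 d aP < x2 d aP]).
    * move=> /existsP [d hd].
      have he2 : 0 < e2 by rewrite -he.
      case: (ltngtP d d') => hdd.
      -- have h0 : 0 < x2 d aP by apply: le_lt_trans hd; have /andP[] := xP_le d s1.
         have hl : lev pr m K2 b2 x2 d < lev pr m K2 b2 x2 d'.
           by rewrite /lev ltr_pM2l // ltrD2l ltr_pM2r // deg_lt.
         move: hd'; rewrite (CA hv hA n2 n2 hl h0) ltNge.
         by have /andP[_ ->] := xP_le d' s1.
      -- have h0 : 0 < x1 d' aP by apply: le_lt_trans hd'; have /andP[] := xP_le d' s2.
         have hl : lev pr m K1 b1 x1 d' < lev pr m K1 b1 x1 d.
           by rewrite /lev ltr_pM2l // ltrD2l ltr_pM2r // deg_lt.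
         move: hd; rewrite (CA hv hA n1 n1 hl h0) ltNge.
         by have /andP[_ ->] := xP_le d s2.
      -- have ed : d = d' by apply: val_inj.
         by move: hd; rewrite ed ltNge (ltW hd').
    * rewrite negb_exists => /forallP pw.
      have pw' : forall d, x2 d aP <= x1 d aP by move=> d; rewrite leNgt pw.
      have := exposure_strict hv hp hK1 hK hb hbb s1 s2 pw' hd'.
      by rewrite -/e1 -/e2 he ltxx.
  + have z1 := exposure_zero _ hv hp hK1 hb s1 he0.
    have z2 : forall d, x2 d aP = m d.
      by move=> d; apply: exposure_zero hv hp hK2 hb2 s2 _; rewrite -/e2 -he.
    by apply: ler_sum => d _; rewrite z1 z2.
Qed.

Theorem theorem3 (R : realType) (Dmax : nat) (pr : params R) (m : 'I_Dmax -> R) :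
  valid_params pr -> pop_size_vector m -> assumptionA pr ->
  (forall (K1 K2 : nat) (beta : R),
     (1 <= K1)%N -> (K1 <= K2)%N -> 0 < beta <= 1 ->
     forall x1 x2 : 'I_Dmax -> action -> R,
       nash_eq pr m K1 beta x1 -> nash_eq pr m K2 beta x2 ->
       total_P x1 <= total_P x2) /\
  (forall (K : nat) (beta1 beta2 : R),
     (1 <= K)%N -> 0 < beta1 -> beta1 <= beta2 -> beta2 <= 1 ->
     forall x1 x2 : 'I_Dmax -> action -> R,
       nash_eq pr m K beta1 x1 -> nash_eq pr m K beta2 x2 ->
       total_P x1 <= total_P x2).
Proof.
move=> hv hp hA; split.
- move=> K1 K2 b hK1 hK /andP[hb _] x1 x2 n1 n2.
  exact: Gmain hv hp hA hK1 hK hb (lexx b) n1 n2.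
- move=> K b1 b2 hK hb hbb _ x1 x2 n1 n2.
  exact: Gmain hv hp hA hK (leqnn K) hb hbb n1 n2.
Qed.
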